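(* Let $\mathcal{W}=(Q,\Sigma,\delta,q_\iota,\mathrm{Acc})$ be a binary-branching probabilistic parity word automaton, and for $q\in Q,a\in\Sigma$ write $\delta(q,a)=\{q_1,q_2\}$ for the two distinct states with $\delta(q,a,q_i)=\tfrac12$. Let $\mathcal{A}_\mathcal{W}=(Q,\Sigma,\delta_1,q_\iota,\mathrm{Acc})$ be the probabilistic tree automaton with $\delta_1(p,a,q,q)=\delta(p,a,q)$ and $\delta_1(p,a,q,q')=0$ for $q\neq q'$, and let $\mathcal{A}^{\mathrm{switch}}_\mathcal{W}=(Q,\Sigma,\delta_2,q_\iota,\mathrm{Acc})$ be the probabilistic tree automaton with $\delta_2(p,a,q_1,q_2)=\delta_2(p,a,q_2,q_1)=\tfrac12$ whenever $\delta(p,a)=\{q_1,q_2\}$, and $\delta_2(p,a,q,q')=0$ otherwise. Then $\mathcal{L}^{=1}_{\mathrm{qual}}(\mathcal{A}_\mathcal{W})=\mathcal{L}^{=1}_{\mathrm{qual}}(\mathcal{A}^{\mathrm{switch}}_\mathcal{W})$.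
   Context: Probabilistic word automaton: $(Q,\Sigma,\delta,q_\iota,\mathrm{Acc})$, $Q$ finite, $\Sigma$ finite, $\delta:Q\times\Sigma\times Q\to[0,1]$ with $\sum_p\delta(q,a,p)=1$. Binary branching: all transition probabilities lie in $\{0,\tfrac12\}$. Parity condition given by $\alpha:Q\to\{0,\dots,k\}$: a sequence $r\in Q^\omega$ is in $\mathrm{Acc}$ iff the minimum of $\alpha(q)$ over states occurring infinitely often in $r$ is even. Trees: a $\Sigma$-tree is a map $t:\{0,1\}^*\to\Sigma$; a branch is $\pi\in\{0,1\}^\omega$ and $t(\pi)=t(\epsilon)t(\pi_0)t(\pi_0\pi_1)\cdots$. The coin-flipping measure $\mu$ on $\{0,1\}^\omega$ gives the cone $u\{0,1\}^\omega$ measure $2^{-|u|}$. A probabilistic tree automaton is $(Q,\Sigma,\delta,q_\iota,\mathrm{Acc})$ with $\delta:Q\times\Sigma\times Q\times Q\to[0,1]$, $\sum_{q_0,q_1}\delta(q,a,q_0,q_1)=1$. A run on $t$ is a $Q$-tree $\rho$ with $\rho(\epsilon)=q_\iota$ and $\delta(\rho(u),t(u),\rho(u0),\rho(u1))>0$ for all $u$. A run is qualitatively accepting if $\mu(\{\pi:\rho(\pi)\in\mathrm{Acc}\})=1$. The measure $\mu_t$ on runs on $t$: the set of runs agreeing with a given partial run on all nodes of length $\le n$ has measure $\prod_{|u|<n}\delta(\rho(u),t(u),\rho(u0),\rho(u1))$ (children labels chosen independently at every node). $\mathcal{L}^{=1}_{\mathrm{qual}}(\mathcal{A})=\{t:\mu_t(\{\rho:\rho\text{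 qualitatively accepting}\})=1\}$. *)

(* Defs.v *)
From HB Require Import structures.
From mathcomp Require Import all_boot all_order all_algebra.
From mathcomp Require Import all_classical all_reals all_analysis.
Set Implicit Arguments. Unset Strict Implicit. Unset Printing Implicit Defensive.
Import Order.TTheory GRing.Theory Num.Theory.
Local Open Scope classical_set_scope.
Local Open Scope ring_scope.

(* Encoding: the direction 0 is [false], 1 is [true]; a node of the binary
   tree is a word [u : seq bool]; [rcons u false] is u0, [rcons u true] is u1. *)

Definition prefix (pi : nat -> bool) (n : nat) : seq bool := mkseq pi n.

Definition along {X : Type} (t : seq bool -> X) (pi : nat -> bool) : nat -> X :=
  fun n => t (prefix pi n).

Definition inf_often {Q : Type} (r : nat -> Q) (q : Q) : Prop :=
  forall N, exists n, (N <= n)%N /\ r n = q.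

Definition parity_acc {Q : Type} (alpha : Q -> nat) (r : nat -> Q) : Prop :=
  exists q, [/\ inf_often r q, ~~ odd (alpha q) &
                forall q', inf_often r q' -> (alpha q <= alpha q')%N].

Definition cone (u : seq bool) : set (nat -> bool) :=
  [set pi | prefix pi (size u) = u].
Definition cones : set (set (nat -> bool)) := [set cone u | u in setT].
Definition branch_space := g_sigma_algebraType cones.

Definition coin_flipping {R : realType} (mu : probability branch_space R) : Prop :=
  forall u : seq bool, mu (cone u) = ((2%:R ^- size u : R))%:E.

Definition qtree (Q : finType) (qi : Q) := seq bool -> Q.
HB.instance Definition _ (Q : finType) (qi : Q) := Choice.on (qtree qi).
HB.instance Definition _ (Q : finType) (qi : Q) :=
  isPointed.Build (qtree qi) (fun _ => qi).

Definition agree_upto {Q : finType} (n : nat) (r : seq bool -> Q) : set (seq bool -> Q) :=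
  [set rho | forall w, (size w <= n)%N -> rho w = r w].
Definition run_cyls (Q : finType) (qi : Q) : set (set (qtree qi)) :=
  [set A | exists n r, A = agree_upto n r].
Arguments run_cyls : clear implicits.
Definition run_space (Q : finType) (qi : Q) := g_sigma_algebraType (run_cyls Q qi).
Arguments run_space : clear implicits.

Definition tree_delta (R : realType) (Q S : finType) := Q -> S -> Q -> Q -> R.

(** The measure mu_t on runs of a probabilistic tree automaton on tree t:
    the set of runs agreeing with a partial run r on the nodes of length <= n
    has measure prod_{|u|<n} delta(r(u),t(u),r(u0),r(u1)); trees whose root
    is not q_iota are not runs and get measure 0. *)
Definition run_measure {R : realType} {Q S : finType} (dT : tree_delta R Q S)
  (qi : Q) (t : seq bool -> S) (P : probability (run_space Q qi) R) : Prop :=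
  forall (n : nat) (r : seq bool -> Q),
    P (agree_upto n r) =
    (((r [::] == qi)%:R *
      \prod_(k < n) \prod_(w : k.-tuple bool)
         dT (r w) (t w) (r (rcons w false)) (r (rcons w true))) : R)%:E.

Definition qual_accepting {R : realType} {Q : finType} (alpha : Q -> nat)
  (mu : probability branch_space R) (rho : seq bool -> Q) : Prop :=
  mu [set pi | parity_acc alpha (along rho pi)] = 1%E.

Definition Lqual {R : realType} {Q S : finType} (qi : Q) (alpha : Q -> nat)
  (mu : probability branch_space R)
  (Pt : (seq bool -> S) -> probability (run_space Q qi) R) : set (seq bool -> S) :=
  [set t | Pt t [set rho : run_space Q qi | qual_accepting alpha mu rho] = 1%E].

Definition binary_branching {R : realType} {Q S : finType} (delta : Q -> S -> Q -> R) : Prop :=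
  (forall q a p, delta q a p = 0 \/ delta q a p = 2%:R^-1) /\
  (forall q a, \sum_(p : Q) delta q a p = 1).

Definition delta_diag {R : realType} {Q S : finType} (delta : Q -> S -> Q -> R)
  : tree_delta R Q S :=
  fun p a q q' => if q == q' then delta p a q else 0.

Definition delta_switch {R : realType} {Q S : finType} (delta : Q -> S -> Q -> R)
  : tree_delta R Q S :=
  fun p a q q' =>
    if [&& q != q', delta p a q == 2%:R^-1 & delta p a q' == 2%:R^-1]
    then 2%:R^-1 else 0.

Arguments run_measure {R Q S} dT qi t P.
Arguments Lqual {R Q S} qi alpha mu Pt.

(* Main.v *)
Require Import Defs.
From HB Require Import structures.
From mathcomp Require Import all_boot all_order all_algebra.
From mathcomp Require Import all_classical all_reals all_analysis.
From mathcomp Require finmap.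
From mathcomp Require Import measurable_realfun lebesgue_integral_fubini.
From mathcomp.algebra_tactics Require Import lra.
Require Import Defs.
Set Implicit Arguments. Unset Strict Implicit. Unset Printing Implicit Defensive.
Import Order.TTheory GRing.Theory Num.Theory.
Local Open Scope classical_set_scope.
Local Open Scope ring_scope.

Fixpoint nodes (n : nat) : seq (seq bool) :=
  if n is n'.+1 then [::] :: [seq b :: w | b <- [:: false; true], w <- nodes n']
  else [:: [::]].

Lemma nodesP n w : (size w <= n)%N -> w \in nodes n.
Proof.
elim: n w => [|n IH] [|b w] //=; rewrite ?inE ?eqxx //.
move=> hw; rewrite !mem_cat; case: b.
  by rewrite mem_map ?IH ?orbT //; move=> x y [].
by rewrite mem_map ?IH //; move=> x y [].
Qed.

Lemma nodes_size n w : w \in nodes n -> (size w <= n)%N.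
Proof.
elim: n w => [|n IH] w /=; first by rewrite mem_seq1 => /eqP ->.
rewrite in_cons => /orP [/eqP -> //|].
rewrite !mem_cat => /or3P [|| //] /mapP [w' /IH h ->] //.
Qed.

Section codes.
Variables (Q : finType) (qi : Q).

Definition decode n (c : (size (nodes n)).-tuple Q) : seq bool -> Q :=
  fun w => nth qi c (index w (nodes n)).

Definition canon n (c : (size (nodes n)).-tuple Q) : bool :=
  tval c == map (decode c) (nodes n).

Definition determined n (A : set (seq bool -> Q)) :=
  forall rho rho', (forall w, (size w <= n)%N -> rho w = rho' w) -> A rho -> A rho'.

Definition code_of n (rho : seq bool -> Q) : (size (nodes n)).-tuple Q :=
  map_tuple rho (in_tuple (nodes n)).

Lemma decode_code_of n rho w : (size w <= n)%N -> decode (code_of n rho) w = rho w.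
Proof.
move=> hw; rewrite /decode /code_of /= (nth_map [::]); last first.
  by rewrite index_mem nodesP.
by rewrite nth_index // nodesP.
Qed.

Lemma canon_code_of n rho : canon (code_of n rho).
Proof.
rewrite /canon; apply/eqP => /=; apply/eq_in_map => w /= wn.
rewrite /decode (nth_map [::]) ?index_mem // nth_index //.
Qed.

Lemma decomp n A : determined n A ->
  A = \bigcup_(c in [set c | canon c && `[< A (decode c) >]]) agree_upto n (@decode n c).
Proof.
move=> dA; apply/seteqP; split => rho.
  move=> Arho; exists (code_of n rho).
    rewrite /= canon_code_of /=; apply/asboolP.
    by apply: (dA rho) => // w hw; rewrite decode_code_of.
  by move=> w hw; rewrite decode_code_of.
case=> c /= /andP [_ /asboolP Ac] hrho; apply: (dA (decode c)) => // w hw; by rewrite hrho.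
Qed.

Lemma decomp_triv n (B : pred _) :
  trivIset [set c | canon c && B c] (fun c => agree_upto n (@decode n c)).
Proof.
move=> c c' /andP [cc _] /andP [cc' _] [rho [h1 h2]].
apply: val_inj; rewrite /= (eqP cc) (eqP cc'); apply/eq_in_map => w wn.
have wn' := nodes_size wn.
by rewrite -(h1 w wn') (h2 w wn').
Qed.

End codes.

Lemma measure_finU d (T : measurableType d) (R : realType)
  (mu : {measure set T -> \bar R}) (I : finType) (p : pred I) (F : I -> set T) :
  (forall i, p i -> measurable (F i)) -> trivIset [set i | p i] F ->
  mu (\bigcup_(i in [set i | p i]) F i) = (\sum_(i | p i) mu (F i))%E.
Proof.
move=> mF tF; rewrite measure_fin_bigcup //; last exact: finite_finset.
rewrite fsbig_finite; last exact: finite_finset.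
rewrite -[RHS]big_filter; apply: perm_big; apply: uniq_perm.
- exact: finmap.fset_uniq.
- by rewrite filter_uniq // index_enum_uniq.
move=> i; rewrite in_fset_set; last exact: finite_finset.
rewrite mem_filter mem_index_enum andbT.
by apply/idP/idP => [/set_mem|h]; [|apply: mem_set].
Qed.

Lemma det_meas (Q : finType) (qi : Q) n (A : set (run_space Q qi)) :
  determined n A -> measurable A.
Proof.
move=> dA; rewrite (decomp qi dA); apply: fin_bigcup_measurable.
  exact: finite_finset.
by move=> c _; apply: sub_sigma_algebra; exists n, (decode qi c).
Qed.

Section cyl.
Variables (R : realType) (Q S : finType) (qi : Q).
Variables (dT : tree_delta R Q S) (delta : Q -> S -> Q -> R).
Variable t : seq bool -> S.
Variable P : probability (run_space Q qi) R.
Hypothesis hP : run_measure dT qi t P.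
Hypothesis hmarg : forall p a (b : bool) q,
  \sum_(x : Q * Q) ((if b then x.2 else x.1) == q)%:R * dT p a x.1 x.2 = delta p a q.
Hypothesis htot : forall p a, \sum_(x : Q * Q) dT p a x.1 x.2 = 1.

Definition ext n (r : seq bool -> Q) (h : {ffun n.-tuple bool -> Q * Q}) : seq bool -> Q :=
  fun w => if size w == n.+1 then
     (let x := h (insubd (nseq_tuple n false) (take n w)) in
      if nth false w n then x.2 else x.1)
   else r w.

Lemma ext_le n r h w : (size w <= n)%N -> @ext n r h w = r w.
Proof. by move=> hw; rewrite /ext; case: eqP => // e; move: hw; rewrite e ltnn. Qed.

Lemma ext_child n r h (w : n.-tuple bool) (b : bool) :
  @ext n r h (rcons w b) = if b then (h w).2 else (h w).1.
Proof.
rewrite /ext size_rcons size_tuple eqxx -cats1 take_size_cat ?size_tuple //.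
rewrite valKd nth_cat size_tuple ltnn subnn /=; by case: b.
Qed.

Lemma rcons_take_nth (w : seq bool) n : size w = n.+1 ->
  rcons (take n w) (nth false w n) = w.
Proof.
move=> hw; rewrite -take_nth; last by rewrite hw.
by rewrite -hw take_size.
Qed.

Lemma cyl_step n r h :
  P (agree_upto n.+1 (@ext n r h)) =
  (P (agree_upto n r) * (\prod_(w : n.-tuple bool) dT (r w) (t w) (h w).1 (h w).2)%:E)%E.
Proof.
rewrite !hP big_ord_recr /= -EFinM; congr (_%:E).
rewrite ext_le // -!mulrA; congr (_ * _); congr (_ * _).
  apply: eq_bigr => i _; apply: eq_bigr => w _.
  have hw : (size w <= n)%N by rewrite size_tuple ltnW.
  rewrite !ext_le // size_rcons size_tuple //.
apply: eq_bigr => w _; rewrite !ext_child ext_le // size_tuple //.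
Qed.

Lemma cylY n r (u : n.-tuple bool) (b : bool) q :
  P (agree_upto n r `&` [set rho | rho (rcons u b) = q]) =
  (P (agree_upto n r) * (delta (r u) (t u) q)%:E)%E.
Proof.
pose hc (h : {ffun n.-tuple bool -> Q * Q}) := (if b then (h u).2 else (h u).1) == q.
have -> : agree_upto n r `&` [set rho | rho (rcons u b) = q] =
    \bigcup_(h in [set h | hc h]) agree_upto n.+1 (@ext n r h).
  apply/seteqP; split => rho.
    move=> [hr hq]; exists [ffun w : n.-tuple bool => (rho (rcons w false), rho (rcons w true))].
      by rewrite /= /hc ffunE -hq; clear hc hq; case: b.
    move=> w hw; rewrite /ext; case: eqP => [e|ne]; last first.
      by rewrite hr //; move: hw; rewrite leq_eqVlt ltnS; case/orP => // /eqP.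
    rewrite ffunE val_insubd size_takel ?e // eqxx.
    by rewrite -[in LHS](rcons_take_nth e); case: (nth false w n).
  move=> [h /= hh hcyl]; split.
    by move=> w hw; rewrite hcyl ?ext_le // (leq_trans hw).
  rewrite hcyl ?ext_child ?size_rcons ?size_tuple //.
  by apply/eqP; move: hh; rewrite /hc.
rewrite measure_finU; last first.
- move=> h h' _ _ [rho [h1 h2]]; apply/ffunP => w.
  have e : forall c, (if c then (h w).2 else (h w).1) = (if c then (h' w).2 else (h' w).1).
    move=> c; have sz : (size (rcons w c) <= n.+1)%N by rewrite size_rcons size_tuple.
    by rewrite -(ext_child r h) -(ext_child r h') -(h1 _ sz) -(h2 _ sz).
  by move: (e false) (e true) => /= e1 e2; rewrite [h w]surjective_pairing e1 e2 -surjective_pairing.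
- by move=> h _; apply: sub_sigma_algebra; exists n.+1, (ext r h).
rewrite (eq_bigr (fun h : {ffun n.-tuple bool -> Q * Q} => (P (agree_upto n r) *
   (\prod_(w : n.-tuple bool) dT (r w) (t w) (h w).1 (h w).2)%:E)%E)); last first.
  by move=> h _; exact: cyl_step.
rewrite hP; under eq_bigr do rewrite -EFinM.
rewrite sumEFin -EFinM -mulr_sumr; congr (_ * _)%:E.
pose G (w : n.-tuple bool) (x : Q * Q) :=
  (if w == u then ((if b then x.2 else x.1) == q)%:R else 1) * dT (r w) (t w) x.1 x.2.
transitivity (\sum_(h : {ffun n.-tuple bool -> Q * Q}) \prod_w G w (h w)).
  rewrite big_mkcond; apply: eq_bigr => h _.
  rewrite /G big_split /= -big_mkcond /= big_pred1_eq /hc.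
  by case: (_ == q); rewrite ?mul1r ?mul0r.
rewrite -bigA_distr_bigA (bigD1 u) //= [X in _ * X]big1 ?mulr1.
  by rewrite -(hmarg (r u) (t u) b q); apply: eq_bigr => x _; rewrite /G eqxx.
by move=> w /negbTE wu; rewrite -(htot (r w) (t w)); apply: eq_bigr => x _; rewrite /G wu mul1r.
Qed.

Lemma detY n A (u : n.-tuple bool) b q p : determined n A ->
  (forall rho, A rho -> rho u = p) ->
  P (A `&` [set rho | rho (rcons u b) = q]) = (P A * (delta p (t u) q)%:E)%E.
Proof.
move=> dA Ap; have E := decomp qi dA.
rewrite [in LHS]E [in RHS]E setI_bigcupl !measure_finU.
- rewrite ge0_sume_distrl; last by move=> *; exact: measure_ge0.
  apply: eq_bigr => c /andP [_ /asboolP Ac].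
  have := cylY (decode qi c) u b q; rewrite (Ap _ Ac) => <- //.
- by move=> c _; apply: sub_sigma_algebra; exists n, (decode qi c).
- exact: decomp_triv.
- move=> c _; apply: measurableI; first by apply: sub_sigma_algebra; exists n, (decode qi c).
  apply: (@det_meas _ _ n.+1) => rho rho' e <-; rewrite e // size_rcons size_tuple //.
- move=> c c' hc hc' [rho [[h1 _] [h2 _]]]; apply: (decomp_triv hc hc'); by exists rho.
Qed.

End cyl.

Lemma cbigcup_meas d (T : measurableType d) (I : countType) (F : I -> set T) :
  (forall i, measurable (F i)) -> measurable (\bigcup_i F i).
Proof. by move=> mF; apply: countable_bigcupT_measurable => //; exact: countableP. Qed.

Lemma cbigcap_meas d (T : measurableType d) (I : countType) (F : I -> set T) :
  (forall i, measurable (F i)) -> measurable (\bigcap_i F i).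
Proof.
move=> mF; rewrite -[X in measurable X]setCK setC_bigcap; apply: measurableC.
by apply: cbigcup_meas => i; apply: measurableC.
Qed.

Lemma parity_meas d (T : measurableType d) (Q : finType) (f : T -> nat -> Q)
  (alpha : Q -> nat) :
  (forall n q, measurable [set x | f x n = q]) ->
  measurable [set x | parity_acc alpha (f x)].
Proof.
move=> mf.
pose IO q := \bigcap_N \bigcup_(n in [set n | (N <= n)%N]) [set x | f x n = q].
have mIO q : measurable (IO q).
  by apply: bigcapT_measurable => N; apply: bigcup_measurable => n _.
have IOE q x : IO q x <-> inf_often (f x) q.
  split => [h N|h N _]; first by have [n hn e] := h N I; exists n.
  by have [n [hn e]] := h N; exists n.
have -> : [set x | parity_acc alpha (f x)] =
  \bigcup_(q : Q) (IO q `&` (if ~~ odd (alpha q) then setT else set0) `&`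
    \bigcap_(q' : Q) (if (alpha q' < alpha q)%N then ~` IO q' else setT)).
  apply/seteqP; split => x.
    move=> [q [hq hodd hmin]]; exists q => //; split; first split.
    - exact/IOE.
    - by rewrite hodd.
    move=> q' _; case: ifP => // lt; move=> /IOE /hmin; by rewrite leqNgt lt.
  move=> [q _ [[hq ho] hmin]]; exists q; split.
  - exact/IOE.
  - by case: (odd (alpha q)) ho.
  move=> q' /IOE h'; rewrite leqNgt; apply/negP => lt.
  by have := hmin q' I; rewrite lt; apply.
apply: cbigcup_meas => q; apply: measurableI; first apply: measurableI => //.
  by case: ifP.
by apply: cbigcap_meas => q'; case: ifP => _ //; apply: measurableC.
Qed.

Definition Bset (Q : finType) (qi : Q) (pi : nat -> bool) (l : seq Q) : set (seq bool -> Q) :=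
  [set rho | forall k, (k < size l)%N -> rho (prefix pi k) = nth qi l k].

Lemma size_pfx pi n : size (prefix pi n) = n.
Proof. exact: size_mkseq. Qed.

Lemma prefixS pi n : prefix pi n.+1 = rcons (prefix pi n) (pi n).
Proof. by rewrite /prefix /mkseq -addn1 iotaD map_cat cats1. Qed.

Definition ptup pi n : n.-tuple bool :=
  @Tuple n bool (prefix pi n) (introT eqP (size_pfx pi n)).

Section branch.
Variables (Q : finType) (qi : Q) (pi : nat -> bool).

Lemma B_det l : determined (size l).-1 (Bset qi pi l).
Proof.
move=> rho rho' e h k hk; rewrite -h // e // size_pfx.
by case: (size l) hk.
Qed.

Lemma B_rcons l q :
  Bset qi pi (rcons l q) = Bset qi pi l `&` [set rho | rho (prefix pi (size l)) = q].
Proof.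
apply/seteqP; split => rho.
  move=> h; split.
    move=> k hk; rewrite h; first by rewrite nth_rcons hk.
    by rewrite size_rcons ltnS ltnW.
  by rewrite /= h ?size_rcons // nth_rcons ltnn eqxx.
move=> [h1 h2] k; rewrite size_rcons ltnS leq_eqVlt nth_rcons.
case/orP => [/eqP ->|hk]; first by rewrite ltnn eqxx.
by rewrite hk h1.
Qed.

Lemma B_nil : Bset qi pi [::] = setT.
Proof. by apply/seteqP; split => // rho _ k. Qed.

Lemma B1 q : Bset qi pi [:: q] = agree_upto 0 (fun _ => q).
Proof.
apply/seteqP; split => rho.
  by move=> h [|//] _; exact: (h 0%N).
by move=> h [|//] _; apply: h.
Qed.
End branch.

Section branchP.
Variables (R : realType) (Q S : finType) (qi : Q).
Variables (dT : tree_delta R Q S) (delta : Q -> S -> Q -> R).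
Variable t : seq bool -> S.
Variable P : probability (run_space Q qi) R.
Hypothesis hP : run_measure dT qi t P.
Hypothesis hmarg : forall p a (b : bool) q,
  \sum_(x : Q * Q) ((if b then x.2 else x.1) == q)%:R * dT p a x.1 x.2 = delta p a q.
Hypothesis htot : forall p a, \sum_(x : Q * Q) dT p a x.1 x.2 = 1.
Variable pi : nat -> bool.

Lemma PB_nil : P (Bset qi pi [::]) = 1%E.
Proof. by rewrite B_nil probability_setT. Qed.

Lemma PB1 q : P (Bset qi pi [:: q]) = ((q == qi)%:R)%:E.
Proof. by rewrite B1 hP big_ord0 mulr1. Qed.

Lemma PB_step l q : l != [::] ->
  P (Bset qi pi (rcons l q)) =
  (P (Bset qi pi l) * (delta (last qi l) (t (prefix pi (size l).-1)) q)%:E)%E.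
Proof.
case: l => [//|q0 l0] _; set l := q0 :: l0.
have sl : size l = (size l).-1.+1 by [].
move: (size l).-1 sl => n sl.
rewrite B_rcons sl prefixS -nth_last sl /=.
have dB : determined n (Bset qi pi l) by have := @B_det Q qi pi l; rewrite sl.
have := detY hP hmarg htot (u:=ptup pi n) (p:=nth qi l n) (pi n) q dB.
apply => rho h; apply: h; by rewrite sl.
Qed.
End branchP.

Section unique.
Variables (R : realType) (Q S : finType) (qi : Q).
Variables (dT1 dT2 : tree_delta R Q S) (delta : Q -> S -> Q -> R).
Variable t : seq bool -> S.
Variables (P1 P2 : probability (run_space Q qi) R).
Hypothesis hP1 : run_measure dT1 qi t P1.
Hypothesis hP2 : run_measure dT2 qi t P2.
Hypothesis hmarg1 : forall p a (b : bool) q,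
  \sum_(x : Q * Q) ((if b then x.2 else x.1) == q)%:R * dT1 p a x.1 x.2 = delta p a q.
Hypothesis htot1 : forall p a, \sum_(x : Q * Q) dT1 p a x.1 x.2 = 1.
Hypothesis hmarg2 : forall p a (b : bool) q,
  \sum_(x : Q * Q) ((if b then x.2 else x.1) == q)%:R * dT2 p a x.1 x.2 = delta p a q.
Hypothesis htot2 : forall p a, \sum_(x : Q * Q) dT2 p a x.1 x.2 = 1.
Variable pi : nat -> bool.

Lemma PB_eq l : P1 (Bset qi pi l) = P2 (Bset qi pi l).
Proof.
elim/last_ind: l => [|l q IH]; first by rewrite (PB_nil P1) (PB_nil P2).
have [->|nl] := eqVneq l [::].
  by rewrite /= (PB1 hP1) (PB1 hP2).
by rewrite (PB_step hP1 hmarg1 htot1 _ _ nl) (PB_step hP2 hmarg2 htot2 _ _ nl) IH.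
Qed.

Definition Gpi : set (set (qtree qi)) := [set Bset qi pi l | l in setT] `|` [set set0].

Lemma Gpi_meas : Gpi `<=` @measurable _ (run_space Q qi).
Proof.
move=> A [[l _ <-]|->]; last exact: measurable0.
exact: (det_meas (@B_det Q qi pi l)).
Qed.

Lemma BI l l' : (size l <= size l')%N -> Gpi (Bset qi pi l `&` Bset qi pi l').
Proof.
move=> hs; case: (pselect (forall k, (k < size l)%N -> nth qi l k = nth qi l' k)) => h.
  left; exists l' => //; apply/seteqP; split => rho; last by case.
  move=> h'; split => // k hk; rewrite h' ?h //; exact: leq_trans hk hs.
right; apply/seteqP; split => // rho [h1 h2]; apply: h => k hk.
by rewrite -h1 // h2 // (leq_trans hk hs).
Qed.

Lemma Gpi_setI : setI_closed Gpi.
Proof.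
move=> A B [[l _ <-]|->] [[l' _ <-]|->]; try by right; rewrite ?set0I ?setI0.
case: (leqP (size l) (size l')) => hs; first exact: BI.
by rewrite setIC; apply: BI; apply: ltnW.
Qed.

Lemma coord_meas n q :
  @measurable _ (g_sigma_algebraType Gpi) [set rho | rho (prefix pi n) = q].
Proof.
have -> : [set rho : g_sigma_algebraType Gpi | rho (prefix pi n) = q] =
   \bigcup_(l : seq Q) (if size l == n then Bset qi pi (rcons l q) else set0).
  apply/seteqP; split => rho.
    move=> h; exists (mkseq (fun k => rho (prefix pi k)) n) => //.
    rewrite size_mkseq eqxx => k; rewrite size_rcons size_mkseq ltnS leq_eqVlt.
    rewrite nth_rcons size_mkseq; case/orP => [/eqP ->|hk]; first by rewrite ltnn eqxx.
    by rewrite hk nth_mkseq.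
  move=> [l _]; case: eqP => [sl|_ //] h.
  by have := h n; rewrite nth_rcons sl ltnn eqxx size_rcons sl; apply.
apply: cbigcup_meas => l; case: ifP => _; last exact: measurable0.
by apply: sub_sigma_algebra; left; exists (rcons l q).
Qed.

Lemma sec_eq alpha :
  P1 [set rho | parity_acc alpha (along rho pi)] =
  P2 [set rho | parity_acc alpha (along rho pi)].
Proof.
apply: (@g_sigma_algebra_measure_unique _ R (run_space Q qi) Gpi Gpi_meas (fun _ => Bset qi pi [::])).
- by move=> _; left; exists [::].
- by rewrite B_nil bigcup_const.
- exact: Gpi_setI.
- by move=> A [[l _ <-]|->]; [exact: PB_eq|rewrite !measure0].
- move=> _; rewrite B_nil; apply: (@le_lt_trans _ _ 1%E); last exact: ltry.
  by rewrite le_eqVlt; apply/orP; left; apply/eqP; exact: probability_setT.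
- exact: (@parity_meas _ (g_sigma_algebraType Gpi) Q (fun rho => along rho pi) alpha coord_meas).
Qed.
End unique.

Section intone.
Local Open Scope ereal_scope.
Variables (d : measure_display) (T : measurableType d) (R : realType).
Variable P : probability T R.
Variable f : T -> \bar R.
Hypothesis mf : measurable_fun setT f.
Hypothesis f01 : forall x, 0 <= f x <= 1.

Let A := [set x | 1 <= f x].
Let mA : measurable A.
Proof. by rewrite -[A]setTI; apply: emeasurable_fun_c_infty. Qed.

Lemma int_one_l : P A = 1 -> \int[P]_x f x = 1.
Proof.
move=> PA; apply/eqP; rewrite eq_le; apply/andP; split.
  have h1 : \int[P]_x (cst 1 x) = 1 by rewrite integral_cst // mul1e; exact: probability_setT.
  rewrite -[leRHS]h1; apply: ge0_le_integral => //; first by move=> x _; have /andP[] := f01 x.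
  by move=> x _; have /andP[] := f01 x.
rewrite -PA -[A]setIT -integral_indic //.
apply: ge0_le_integral => //.
  by apply: measurableT_comp => //; exact: measurable_indic.
move=> x _; rewrite indicE; case: (boolP (x \in A)) => [/set_mem h|_] /=.
  by rewrite h.
by have /andP[] := f01 x.
Qed.

Lemma int_one_r : \int[P]_x f x = 1 -> P A = 1.
Proof.
move=> hI.
pose Ak k := [set x | f x <= ((1 - k.+1%:R^-1)%R : R)%:E].
have mAk k : measurable (Ak k) by rewrite -[Ak k]setTI; apply: emeasurable_fun_infty_c.
have PAk k : P (Ak k) = 0.
  set e : R := (k.+1%:R^-1)%R.
  have e0 : (0 < e)%R by rewrite /e invr_gt0 ltr0n.
  have fin : P (Ak k) \is a fin_num.
    rewrite ge0_fin_numE ?measure_ge0 //.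
    by apply: (le_lt_trans (probability_le1 _ _)) => //; exact: ltry.
  have hP : P (Ak k) = (fine (P (Ak k)))%:E by rewrite fineK.
  set a := fine (P (Ak k)) in hP *.
  have a0 : (0 <= a)%R by rewrite -lee_fin -hP measure_ge0.
  have hC : P (~` Ak k) = (1 - a)%:E by rewrite probability_setC // hP.
  have : 1 <= ((1 - e) * a + (1 - a))%:E.
    rewrite -[leLHS]hI -(setUv (Ak k)) ge0_integral_setU //; last 3 first.
    - by rewrite setUv.
    - by move=> x _; have /andP[] := f01 x.
    - by apply/disj_set2P; rewrite setICr.
    rewrite EFinD EFinM -hP -hC; apply: leeD.
      rewrite -integral_cst //; apply: ge0_le_integral => //.
      - by move=> x _; have /andP[] := f01 x.
      - exact: measurable_funS mf.
    apply: (le_trans (y := \int[P]_(x in ~` Ak k) (cst 1 x))); last first.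
      by rewrite integral_cst ?mul1e //; exact: measurableC.
    apply: ge0_le_integral => //; last by move=> x _; have /andP[] := f01 x.
    - by apply: measurableC.
    - by move=> x _; have /andP[] := f01 x.
    - exact: measurable_funS mf.
  by apply: measurableC.
  move=> h; have {h} h : (1 <= (1 - e) * a + (1 - a))%R by rewrite -lee_fin.
  rewrite hP; congr (_%:E); apply/eqP; rewrite eq_le a0 andbT.
  nra.
have hC : P (~` A) = 0.
  apply/eqP; rewrite eq_le measure_ge0 andbT.
  rewrite -(@eseries0 _ (fun k => P (Ak k)) 0 xpredT); last by move=> i _ _; exact: PAk.
  apply: measure_sigma_subadditive => //; first exact: measurableC.
  move=> x /= nx; have /andP [f0 f1] := f01 x.
  have : f x \is a fin_num by rewrite ge0_fin_numE // (le_lt_trans f1) // ltry.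
  move/fineK => fx.
  have f1' : (fine (f x) <= 1)%R by rewrite -lee_fin fx.
  have lt1 : (fine (f x) < 1)%R.
    rewrite lt_neqAle f1' andbT; apply/eqP => e1; apply: nx.
    by rewrite /A /= -fx e1.
  have [k hk] := ltr_add_invr lt1; exists k => //=.
  rewrite /Ak /= -fx lee_fin lerBrDr; exact: ltW.
rewrite -(setCK A) probability_setC ?hC ?sube0 //; exact: measurableC.
Qed.

End intone.

Section margs.
Variables (R : realType) (Q S : finType) (delta : Q -> S -> Q -> R).
Hypothesis hb : binary_branching delta.

Lemma tot_of_marg (dT : tree_delta R Q S) :
  (forall p a (b : bool) q,
   \sum_(x : Q * Q) ((if b then x.2 else x.1) == q)%:R * dT p a x.1 x.2 = delta p a q) ->
  forall p a, \sum_(x : Q * Q) dT p a x.1 x.2 = 1.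
Proof.
move=> hm p a; rewrite -(hb.2 p a).
under [RHS]eq_bigr do rewrite -(hm p a false).
rewrite exchange_big /=; apply: eq_bigr => x _; rewrite -big_distrl /=.
rewrite (bigD1 x.1) //= eqxx big1 ?addr0 ?mul1r // => q /negbTE.
by rewrite eq_sym => ->.
Qed.

Lemma marg_diag p a (b : bool) q :
  \sum_(x : Q * Q) ((if b then x.2 else x.1) == q)%:R * delta_diag delta p a x.1 x.2
  = delta p a q.
Proof.
rewrite -(pair_bigA _ (fun i j => ((if b then j else i) == q)%:R * delta_diag delta p a i j)) /=.
rewrite (eq_bigr (fun i => (i == q)%:R * delta p a i)).
  rewrite (bigD1 q) //= eqxx mul1r big1 ?addr0 // => i /negbTE ->; by rewrite mul0r.
move=> i _; rewrite (bigD1 i) //= /delta_diag eqxx big1 ?addr0.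
  by case: b.
by move=> j /negbTE; rewrite eq_sym => ->; rewrite mulr0.
Qed.

Let h : R := 2%:R^-1.

Lemma dval p a j : (if delta p a j == h then h else 0) = delta p a j.
Proof. by case: (hb.1 p a j) => ->; rewrite ?eqxx // eq_sym invr_eq0 pnatr_eq0. Qed.

Lemma sum_other p a q :
  \sum_j (if (j != q) && (delta p a j == h) then h else 0) = 1 - delta p a q.
Proof.
rewrite -(hb.2 p a) (bigD1 q) //= eqxx /= add0r [in RHS](bigD1 q) //= [RHS]addrC addKr.
by apply: eq_bigr => j ->; rewrite dval.
Qed.

Lemma marg_switch p a (b : bool) q :
  \sum_(x : Q * Q) ((if b then x.2 else x.1) == q)%:R * delta_switch delta p a x.1 x.2
  = delta p a q.
Proof.
have hh : 1 - h = h by rewrite /h {1}(splitr 1) div1r addrK.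
rewrite -(pair_bigA _ (fun i j => ((if b then j else i) == q)%:R * delta_switch delta p a i j)) /=.
case: b.
  rewrite exchange_big /= (bigD1 q) //= [X in _ + X]big1 ?addr0; last first.
    by move=> j /negbTE jq; apply: big1 => i _; rewrite jq mul0r.
  under eq_bigr do rewrite eqxx mul1r.
  case: (eqVneq (delta p a q) h) => e.
    rewrite e -hh -e -(sum_other p a q); apply: eq_bigr => i _.
    by rewrite /delta_switch e eqxx andbT.
  rewrite big1; last by move=> i _; rewrite /delta_switch (negbTE e) !andbF.
  by case: (hb.1 p a q) e => -> //; rewrite eqxx.
rewrite (bigD1 q) //= [X in _ + X]big1 ?addr0; last first.
  by move=> i /negbTE iq; apply: big1 => j _; rewrite iq mul0r.
under eq_bigr do rewrite eqxx mul1r.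
case: (eqVneq (delta p a q) h) => e.
  rewrite e -hh -e -(sum_other p a q); apply: eq_bigr => j _.
  by rewrite /delta_switch e eqxx eq_sym.
rewrite big1; last by move=> j _; rewrite /delta_switch (negbTE e) !andbF.
by case: (hb.1 p a q) e => -> //; rewrite eqxx.
Qed.

End margs.

Section final.
Variables (R : realType) (Q S : finType) (qi : Q) (alpha : Q -> nat).
Variable mu : probability branch_space R.

Definition Eset : set (run_space Q qi * branch_space) :=
  [set z | parity_acc alpha (along z.1 z.2)].

Lemma mEset : measurable Eset.
Proof.
apply: (@parity_meas _ _ Q (fun z : run_space Q qi * branch_space => along z.1 z.2)).
move=> n q.
have -> : [set z : run_space Q qi * branch_space | along z.1 z.2 n = q] =
  \bigcup_(u : n.-tuple bool) ([set rho : run_space Q qi | rho u = q] `*` cone u).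
  apply/seteqP; split => -[rho pi] /=.
    move=> h; exists (ptup pi n) => //; split => //.
    by rewrite /cone /= size_pfx.
  move=> [u _ [/= h1 h2]]; move: h2; rewrite /cone /= size_tuple => h2.
  by rewrite /along h2.
apply: cbigcup_meas => u; apply: measurableX.
  apply: (@det_meas Q qi n [set rho | rho u = q]) => rho rho' e <-; rewrite e // size_tuple.
  by [].
by apply: sub_sigma_algebra; exists u.
Qed.

Lemma xsecE rho : xsection Eset rho = [set pi | parity_acc alpha (along rho pi)].
Proof.
apply/seteqP; split => pi; rewrite /xsection /=.
  by move/set_mem.
by move=> h; apply: mem_set.
Qed.

Lemma ysecE pi : ysection Eset pi = [set rho | parity_acc alpha (along rho pi)].
Proof.
apply/seteqP; split => rho; rewrite /ysection /=.
  by move/set_mem.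
by move=> h; apply: mem_set.
Qed.

Definition Ffun (rho : run_space Q qi) : \bar R := mu (xsection Eset rho).

Lemma Ffun_meas : measurable_fun setT Ffun.
Proof. exact: (measurable_fun_xsection mu mEset). Qed.

Lemma Ffun01 rho : (0 <= Ffun rho <= 1)%E.
Proof.
rewrite /Ffun measure_ge0 /=; apply: probability_le1.
exact: measurable_xsection mEset.
Qed.

Lemma int_Ffun (P : probability (run_space Q qi) R) :
  (\int[P]_x Ffun x = \int[mu]_y P (ysection Eset y))%E.
Proof.
have := indic_fubini_tonelli P mu mEset.
rewrite (indic_fubini_tonelli_FE mu mEset) (indic_fubini_tonelli_GE P mEset).
by [].
Qed.

Lemma acc_set : [set rho : run_space Q qi | qual_accepting alpha mu rho] =
  [set rho | (1 <= Ffun rho)%E].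
Proof.
apply/seteqP; split => rho /=; rewrite /qual_accepting /Ffun xsecE.
  by move=> ->.
by move=> h; apply/eqP; rewrite eq_le h andbT; have := Ffun01 rho; rewrite /Ffun xsecE => /andP[].
Qed.

End final.

Theorem lemma3p10 (R : realType) (Q S : finType) (delta : Q -> S -> Q -> R)
  (qi : Q) (alpha : Q -> nat) :
  binary_branching delta ->
  forall mu : probability branch_space R, coin_flipping mu ->
  forall P1 P2 : (seq bool -> S) -> probability (run_space Q qi) R,
  (forall t, run_measure (delta_diag delta) qi t (P1 t)) ->
  (forall t, run_measure (delta_switch delta) qi t (P2 t)) ->
  Lqual qi alpha mu P1 = Lqual qi alpha mu P2.
Proof.
move=> hb mu _ P1 P2 h1 h2.
have hm1 := marg_diag delta.
have hm2 := marg_switch hb.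
have ht1 := tot_of_marg hb hm1.
have ht2 := tot_of_marg hb hm2.
have ieq t : (\int[P1 t]_x Ffun (qi:=qi) alpha mu x = \int[P2 t]_x Ffun (qi:=qi) alpha mu x)%E.
  rewrite !int_Ffun; apply: eq_integral => pi _.
  rewrite ysecE; exact: (sec_eq (h1 t) (h2 t) hm1 ht1 hm2 ht2).
apply/seteqP; split => t; rewrite /Lqual /= (acc_set qi alpha mu) => h.
  apply: int_one_r; [exact: Ffun_meas|exact: Ffun01|].
  by rewrite -ieq; apply: int_one_l => //; [exact: Ffun_meas|exact: Ffun01].
apply: int_one_r; [exact: Ffun_meas|exact: Ffun01|].
by rewrite ieq; apply: int_one_l => //; [exact: Ffun_meas|exact: Ffun01].
Qed.
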